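(* Let $r,\delta,n,h$ be positive integers and $\lambda$ an integer with $r\ge 2$, $n\geq (\lambda+1)(h+1)^2$, $\lambda\geq r-1$ and $h\geq\delta$. If $G\in \mathcal{K}_{n,\delta}^{\lambda_r^h}$ (with $\lambda^h_r=\lambda$), then $$n-(r-1)(h+1)-1<\rho(G)< n-(r-1)(h+1).$$
   Context: All graphs are finite and simple; $\rho(G)$ denotes the spectral radius of the adjacency matrix of $G$; $K_m$ is the complete graph on $m$ vertices, $\cup$ denotes disjoint union, $sK_m$ denotes $s$ disjoint copies of $K_m$. For integers $r\ge 2$, $h\ge 0$, the $h$-extra $r$-component edge-connectivity $\lambda^h_r(G)$ of a graph $G$ is the minimum size of an edge subset $F\subseteq E(G)$ such that $G-F$ is disconnected, has at least $r$ connected components, and every component of $G-F$ has at least $h+1$ vertices. $\mathcal{K}_{n,\delta}^{\lambda_r^h}$ denotes the set of graphs $G$ with $h$-extra $r$-component edge-connectivity $\lambda^h_r(G)=\lambda$ and minimum degree $\delta$ that are obtained from $K_{n-(r-1)(h+1)}\cup (r-2)K_{h+1}\cup K_h\cup K_1$ as follows: add $t$ edges between the vertex of $K_1$ and vertices of $K_h$, for some $1\leq t\leq \delta$; add $r-1$ edges joining a vertex of $K_{n-(r-1)(h+1)}$ to one vertex in each copy of $K_{h+1}$ and to one vertex of $K_h$; and then add $\lambda-r+1-\delta+t$ further edges between $K_{n-(r-1)(h+1)}$ and $(r-2)K_{h+1}\cup K_h\cup K_1$. *)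

(* Defs.v *)
From HB Require Import structures.
From mathcomp Require Import all_boot all_order all_algebra.
From mathcomp Require Import polyrcf.
From mathcomp Require Import reals.
Set Implicit Arguments. Unset Strict Implicit. Unset Printing Implicit Defensive.
Import Order.TTheory GRing.Theory Num.Theory.

Definition simple_graph n (e : rel 'I_n) : Prop :=
  (forall x, ~~ e x x) /\ (forall x y, e x y = e y x).

Definition edges n (e : rel 'I_n) : {set {set 'I_n}} :=
  [set E : {set 'I_n} | [exists x, exists y, e x y && (E == [set x; y])]].

Definition del_edges n (e : rel 'I_n) (F : {set {set 'I_n}}) : rel 'I_n :=
  fun x y => e x y && ([set x; y] \notin F).

Definition components n (e : rel 'I_n) : {set {set 'I_n}} :=
  [set [set y | connect e x y] | x : 'I_n].

Definition extra_comp_cut n (e : rel 'I_n) (r h : nat) (F : {set {set 'I_n}}) :=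
  [/\ F \subset edges e,
      1 < #|components (del_edges e F)|,
      r <= #|components (del_edges e F)|
    & forall C, C \in components (del_edges e F) -> h.+1 <= #|C|].

Definition extra_comp_edge_conn_eq n (e : rel 'I_n) (r h lam : nat) : Prop :=
  (exists F, extra_comp_cut e r h F /\ #|F| = lam) /\
  (forall F, extra_comp_cut e r h F -> lam <= #|F|).

Definition deg n (e : rel 'I_n) (x : 'I_n) : nat := #|[set y | e x y]|.

Definition min_degree_eq n (e : rel 'I_n) (d : nat) : Prop :=
  (exists x, deg e x = d) /\ (forall x, d <= deg e x).

Definition adj_mx (R : realType) n (e : rel 'I_n) : 'M[R]_n :=
  (\matrix_(i, j) (e i j)%:R)%R.

(* For a real symmetric matrix (such as
   an adjacency matrix) all eigenvalues are real, so this is rho(G). *)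
Definition spec_rad (R : realType) n (e : rel 'I_n) : R :=
  (\big[Num.max/0]_(x <- rootsR (char_poly (adj_mx R e))) `|x|)%R.

(* Vertex labelling p : 'I_n -> nat:
     p x = 0         : the big clique K_{n-(r-1)(h+1)}
     p x = i, 1<=i<=r-2 : the i-th copy of K_{h+1}
     p x = r-1       : the K_h
     p x = r         : the K_1 (vertex v). *)
Definition in_family_K n (delta r h lam : nat) (e : rel 'I_n) : Prop :=
  simple_graph e /\
  extra_comp_edge_conn_eq e r h lam /\
  min_degree_eq e delta /\
  exists (p : 'I_n -> nat) (a v : 'I_n) (t : nat),
    [/\ (forall x, p x <= r),
        #|[set x | p x == 0]| = n - (r - 1) * (h + 1),
        (forall i, 1 <= i <= r - 2 -> #|[set x | p x == i]| = h + 1),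
        #|[set x | p x == r - 1]| = h &
        [set x | p x == r] = [set v] /\
      [/\
          (forall x y, x != y -> p x = p y -> e x y),
          (forall x y, e x y -> 0 < p x -> 0 < p y -> p x != p y ->
                (p x == r - 1) && (p y == r) || (p x == r) && (p y == r - 1)),
          1 <= t <= delta /\ #|[set y | e v y & p y == r - 1]| = t,
          p a = 0 /\ (forall i, 1 <= i <= r - 1 -> exists y, p y = i /\ e a y) &
          (* r-1 + (lam - r + 1 - delta + t) edges in total between the big
             clique and the rest (the lam-r+1-delta+t further edges are
             distinct from the r-1 edges at a, so their number is >= 0) *)
          #|[set E in edges e | [exists x in E, p x == 0] &&
                                [exists y in E, p y != 0]]| + delta
            = lam + t ] ].

(* Main.v *)
Require Import Defs.
From HB Require Import structures.
From mathcomp Require Import all_boot all_order all_algebra.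
From mathcomp Require Import polyrcf.
From mathcomp Require Import reals.
From mathcomp Require Import zify complex sesquilinear spectral.
Import Order.TTheory GRing.Theory Num.Theory.

Lemma cross_bound n (e : rel 'I_n) (p : 'I_n -> nat) lam :
  #|[set E in edges e | [exists x in E, p x == 0] && [exists y in E, p y != 0]]| <= lam ->
  \sum_l \sum_i ((p l == 0) && (p i != 0) && e l i : nat) <= lam.
Proof.
move=> H; apply: leq_trans H.
pose S := [set u : 'I_n * 'I_n | (p u.1 == 0) && (p u.2 != 0) && e u.1 u.2].
have -> : \sum_l \sum_i ((p l == 0) && (p i != 0) && e l i : nat) = #|S|.
  rewrite pair_big /= -sum1_card [RHS]big_mkcond /=; apply: eq_bigr => u _.
  by rewrite inE; case: ((p u.1 == 0) && (p u.2 != 0) && e u.1 u.2).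
pose f (u : 'I_n * 'I_n) := [set u.1; u.2].
rewrite -(@card_in_imset _ _ f S); last first.
  move=> [l i] [l' i']; rewrite !inE /= => /andP[/andP[pl pi] _] /andP[/andP[pl' pi'] _].
  rewrite /f /= => E.
  have : l \in [set l'; i'] by rewrite -E !inE eqxx.
  rewrite !inE => /orP[/eqP ll|/eqP li]; last by move: pi'; rewrite -li (eqP pl).
  have : i \in [set l'; i'] by rewrite -E !inE eqxx orbT.
  rewrite !inE => /orP[/eqP il|/eqP ii]; first by move: pi; rewrite il -ll (eqP pl).
  by rewrite ll ii.
apply: subset_leq_card; apply/subsetP => E /imsetP [[l i]]; rewrite inE /= => /andP[/andP[pl pi] eli] ->.
rewrite !inE /f /=; apply/and3P; split.
- by apply/existsP; exists l; apply/existsP; exists i; rewrite eli eqxx.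
- by apply/existsP; exists l; rewrite !inE eqxx pl.
- by apply/existsP; exists i; rewrite !inE eqxx orbT pi.
Qed.

Lemma sum_card n (P : pred 'I_n) : \sum_i (P i : nat) = #|[set i | P i]|.
Proof.
rewrite -sum1_card [RHS]big_mkcond /=; apply: eq_bigr => i _.
by rewrite inE; case: (P i).
Qed.

Lemma out_nbr n (e : rel 'I_n) (p : 'I_n -> nat) r h v j :
  (forall x, ~~ e x x) -> (forall x, p x <= r) -> 2 <= r ->
  (forall i, 1 <= i <= r - 2 -> #|[set x | p x == i]| = h + 1) ->
  #|[set x | p x == r - 1]| = h ->
  [set x | p x == r] = [set v] ->
  (forall x y, e x y -> 0 < p x -> 0 < p y -> p x != p y ->
                (p x == r - 1) && (p y == r) || (p x == r) && (p y == r - 1)) ->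
  p j != 0 ->
  \sum_i ((p i != 0) && e j i : nat) <= h.
Proof.
move=> irr ple r2 Hparts Hrm1 Hv Hno pj.
rewrite sum_card.
have pjr := ple j.
have vE : forall x, (p x == r) = (x == v).
  by move=> x; move/setP: Hv => /(_ x); rewrite !inE.
have Hno' : forall i, e j i -> p i != 0 -> p i != p j ->
    (p j == r - 1) && (p i == r) || (p j == r) && (p i == r - 1).
  move=> i eji pi pij; apply: Hno; by rewrite ?lt0n // eq_sym.
case: (ltngtP (p j) (r - 1)) => [lt|gt|eq].
-
  have Hq : 1 <= p j <= r - 2 by move: pj; rewrite -lt0n => pj; apply/andP; split; lia.
  apply: (@leq_trans #|[set x | p x == p j] :\ j|).
    apply: subset_leq_card; apply/subsetP => i; rewrite !inE => /andP[pi eji].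
    have ij : i != j by apply: contraTneq eji => ->; rewrite irr.
    rewrite ij /=; apply/negPn/negP => pij.
    have := Hno' i eji pi pij.
    by move=> /orP[/andP[/eqP E _]|/andP[/eqP E _]]; lia.
  have jin : j \in [set x | p x == p j] by rewrite inE.
  have := cardsD1 j [set x | p x == p j]; rewrite jin Hparts // => E; lia.
- have pjr' : p j = r by lia.
  apply: (@leq_trans #|[set x | p x == r - 1]|); last by rewrite Hrm1.
  apply: subset_leq_card; apply/subsetP => i; rewrite !inE => /andP[pi eji].
  have ij : i != j by apply: contraTneq eji => ->; rewrite irr.
  have pij : p i != p j.
    apply: contra ij; rewrite pjr' vE => /eqP ->.
    by rewrite eq_sym -vE pjr'.
  have := Hno' i eji pi pij.
  by rewrite pjr' => /orP[/andP[/eqP E _]|/andP[_ ->]] //; lia.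
- apply: (@leq_trans #|([set x | p x == r - 1] :\ j) :|: [set v]|).
    apply: subset_leq_card; apply/subsetP => i; rewrite !inE => /andP[pi eji].
    have ij : i != j by apply: contraTneq eji => ->; rewrite irr.
    rewrite ij /=; have [pij'|pij] := eqVneq (p i) (p j); first by rewrite pij' eq eqxx.
    have := Hno' i eji pi pij.
    move=> /orP[/andP[_ pir]|/andP[/eqP E _]]; last lia.
    by rewrite -vE pir orbT.
  apply: (leq_trans (leq_card_setU _ _)).
  have jin : j \in [set x | p x == r - 1] by rewrite inE eq.
  have := cardsD1 j [set x | p x == r - 1]; rewrite jin Hrm1 cards1 => E; lia.
Qed.
Lemma g1 lam N D S : 0 < lam -> 2 * lam < N -> D <= lam -> S <= lam ->
  2*lam*N*(N-1) + N*D + 2*lam*S < N*(2*lam*N).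
Proof.
move=> l0 h1 hD hS.
have h2 : N * D + 2 * lam * S <= N * lam + 2 * lam * lam by apply: leq_add; apply: leq_mul.
have h3 : N * lam + 2 * lam * lam < 2 * lam * N by nia.
have h4 : 2*lam*N*(N-1) + 2 * lam * N = N*(2*lam*N) by clear h2 h3; case: N h1 => //= N0 _; rewrite subn1 /=; nia.
lia.
Qed.
Lemma g2 lam N h K D S : D <= h -> S <= lam -> N * h + 2 * (lam * lam) < N * N ->
  2*lam*N*K + N*D + 2*lam*S < N*(N + 2*lam*K).
Proof.
move=> hD hS hN.
have h2 : N * D + 2 * lam * S <= N * h + 2 * lam * lam by apply: leq_add; apply: leq_mul.
nia.
Qed.
Lemma g3 N : 0 < N -> (N-1)*(N*N*N+1) < N*N*(N-1)*N + N + N.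
Proof. by case: N => //= N _; rewrite subn1 /=; nia. Qed.

Local Open Scope ring_scope.

Lemma dom (R : realFieldType) n (A : 'M[R]_n) (w : 'rV[R]_n) (N t : R) :
  (forall i j, 0 <= A i j) -> (forall j, 0 < w 0 j) ->
  (forall j, \sum_i w 0 i * A i j < N * w 0 j) ->
  root (char_poly A) t -> `|t| < N.
Proof.
move=> A0 w0 Hw; rewrite -eigenvalue_root_char => /eigenvalueP [v vA v0].
have [k vk] : exists k, v 0 k != 0.
  apply/existsP; apply: contraR v0; rewrite negb_exists => /forallP H.
  by apply/eqP/rowP => k; rewrite mxE; apply/eqP/negPn/H.
pose F j := `|v 0 j| / w 0 j.
case: (@arg_maxP _ _ _ k predT F isT) => j _ Hj.
have Fle : forall i, `|v 0 i| <= F j * w 0 i.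
  move=> i; have := Hj i isT; rewrite /F => H.
  rewrite -ler_pdivrMr ?w0 //.
have Fpos : 0 < F j.
  apply: lt_le_trans (Hj k isT); rewrite /F divr_gt0 ?w0 ?normr_gt0 //.
have vj : 0 < `|v 0 j|.
  by move: Fpos; rewrite /F pmulr_lgt0 ?invr_gt0 ?w0.
have e : t * v 0 j = \sum_i v 0 i * A i j.
  by move/matrixP: vA => /(_ 0 j); rewrite !mxE => <-.
have : `|t| * `|v 0 j| < N * `|v 0 j|.
  rewrite -normrM e; apply: (le_lt_trans (ler_norm_sum _ _ _)).
  apply: (@le_lt_trans _ _ (F j * \sum_i w 0 i * A i j)).
    rewrite mulr_sumr; apply: ler_sum => i _.
    rewrite normrM (ger0_norm (A0 i j)) mulrA; apply: ler_wpM2r => //.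
  have -> : `|v 0 j| = F j * w 0 j by rewrite /F divfK // gt_eqF ?w0.
  by rewrite mulrCA ltr_pM2l.
by rewrite ltr_pM2r.
Qed.

Lemma specrad_lt (R : realType) n (e : rel 'I_n) (N : R) : 0 < N ->
  (forall t, root (char_poly (adj_mx R e)) t -> `|t| < N) -> spec_rad R e < N.
Proof.
move=> N0 H; rewrite /spec_rad big_seq_cond; apply: bigmax_lt => // x /andP[xin _].
by apply: H; apply: root_roots xin.
Qed.

Lemma specrad_gt (R : realType) n (e : rel 'I_n) (s t : R) :
  root (char_poly (adj_mx R e)) t -> s < t -> s < spec_rad R e.
Proof.
move=> rt st; apply: (lt_le_trans st); apply: (le_trans (ler_norm t)).
rewrite /spec_rad.
have p0 : char_poly (adj_mx R e) != 0 by apply: monic_neq0; apply: char_poly_monic.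
have tin : t \in rootsR (char_poly (adj_mx R e)).
  by rewrite -(roots_on_rootsR p0) rt andbT.
exact: (@le_bigmax_seq _ _ _ _ 0 t xpredT (fun x => `|x|) tin isT).
Qed.

Lemma qf_nat1 (R : realType) n (xn : 'I_n -> nat) :
  ((\row_j (xn j)%:R : 'rV[R]_n) *m (\row_j (xn j)%:R)^T) 0 0 = (\sum_j xn j * xn j)%:R.
Proof. by rewrite !mxE natr_sum; apply: eq_bigr => j _; rewrite !mxE natrM. Qed.

Lemma qf_nat2 (R : realType) n (e : rel 'I_n) (xn : 'I_n -> nat) :
  ((\row_j (xn j)%:R : 'rV[R]_n) *m adj_mx R e *m (\row_j (xn j)%:R)^T) 0 0 =
  (\sum_j (\sum_i xn i * e i j) * xn j)%:R.
Proof.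
rewrite !mxE natr_sum; apply: eq_bigr => j _; rewrite !mxE natrM natr_sum; congr (_ * _).
by apply: eq_bigr => i _; rewrite !mxE natrM.
Qed.

Lemma adj_sym (R : realType) n (e : rel 'I_n) : (forall x y, e x y = e y x) ->
  (adj_mx R e)^T = adj_mx R e.
Proof. by move=> sym; apply/matrixP => i j; rewrite !mxE sym. Qed.

Lemma col_nat (R : realType) n (e : rel 'I_n) (wn : 'I_n -> nat) N j :
  (\sum_i wn i * e i j < N * wn j)%N ->
  \sum_i (\row_k (wn k)%:R : 'rV[R]_n) 0 i * adj_mx R e i j < N%:R * (\row_k (wn k)%:R : 'rV[R]_n) 0 j.
Proof.
move=> H; rewrite mxE -natrM.
rewrite (eq_bigr (fun i => (wn i * e i j)%:R)); last by move=> i _; rewrite !mxE natrM.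
by rewrite -natr_sum ltr_nat.
Qed.

Local Open Scope sesquilinear_scope.

Lemma ray (C : numClosedFieldType) n (A : 'M[C]_n) (x : 'rV[C]_n) (s : C) :
  A \is hermsymmx -> s \is Num.real ->
  s * (x *m x^t*) 0 0 < (x *m A *m x^t*) 0 0 ->
  exists2 d, eigenvalue A d & (d \is Num.real) && (s < d).
Proof.
move=> Aherm sR Hlt.
have /orthomx_spectralP AE := hermitian_normalmx Aherm.
have Pu := spectral_unitarymx A.
have Pinv := invmx_unitary Pu.
have Punit := spectral_unit A.
have dreal := hermitian_spectral_diag_real Aherm.
move: AE Pu Pinv Punit dreal.
set P := spectralmx A; set d := spectral_diag A => AE Pu Pinv Punit dreal.
have [j sj] : exists j, s < d 0 j.
  apply/existsP; apply: contraLR Hlt; rewrite negb_exists => /forallP Hd.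
  set z := x *m P^t*.
  have zt : z^t* = P *m x^t*.
    by rewrite /z trmx_mul map_mxM trmxCK.
  have e1 : x *m A *m x^t* = z *m diag_mx d *m z^t*.
    by rewrite zt AE Pinv /z !mulmxA.
  have e2 : x *m x^t* = z *m z^t*.
    by rewrite zt /z mulmxA -(mulmxA x) -Pinv mulVmx // mulmx1.
  rewrite e1 e2; apply/negP; rewrite le_gtF //.
  clearbody z.
  rewrite mul_mx_diag !mxE mulr_sumr; apply: ler_sum => k _.
  rewrite !mxE mulrAC [s * _]mulrC; apply: ler_wpM2l; first exact: mul_conjC_ge0.
  by rewrite real_leNgt ?Hd //; apply: (mxOverP dreal).
exists (d 0 j); last first.
  by rewrite sj andbT; apply: (mxOverP dreal).
apply/eigenvalueP; exists (row j P).
  have : P *m A = diag_mx d *m P by rewrite AE !mulmxA mulmxV // mul1mx.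
  move=> /(congr1 (row j)); rewrite row_mul => ->.
  by apply/rowP => k; rewrite mul_diag_mx !mxE.
apply/eqP => H0.
have : row j (P *m P^t*) = row j 1%:M by move/unitarymxP: Pu => ->.
rewrite row_mul H0 mul0mx => /rowP /(_ j); rewrite !mxE eqxx /= => /eqP.
by rewrite eq_sym oner_eq0.
Qed.

Lemma ray_real (R : rcfType) n (A : 'M[R]_n) (x : 'rV[R]_n) (s : R) :
  A^T = A -> s * (x *m x^T) 0 0 < (x *m A *m x^T) 0 0 ->
  exists2 t, root (char_poly A) t & s < t.
Proof.
move=> Asym Hlt.
have fR : forall a : R, (real_complex R) a \is Num.real by move=> a; rewrite complex_real.
have cf : forall m k (M : 'M[R]_(m, k)), map_mx Num.conj_op (map_mx (real_complex R) M) = map_mx (real_complex R) M.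
  by move=> m k M; apply/matrixP => i j; rewrite !mxE conj_Creal.
have Aherm : map_mx (real_complex R) A \is hermsymmx.
  apply: realsym_hermsym.
    apply/is_hermitianmxP; rewrite expr0 scale1r map_mx_id // map_trmx Asym //.
  by apply/mxOverP => i j; rewrite mxE.
have [d ed /andP[dR sd]] : exists2 d, eigenvalue (map_mx (real_complex R) A) d & (d \is Num.real) && ((real_complex R) s < d).
  apply: (@ray _ _ (map_mx (real_complex R) A) (map_mx (real_complex R) x) ((real_complex R) s) Aherm (fR s)).
  have xt : (map_mx (real_complex R) x)^t* = map_mx (real_complex R) x^T.
    by apply/matrixP=> i j; rewrite !mxE conj_Creal.
  have m00 : forall k (M : 'M[R]_(1,k)) (N : 'M[R]_(k,1)),
    (map_mx (real_complex R) M *m map_mx (real_complex R) N) 0 0 = real_complex R ((M *m N) 0 0).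
    by move=> k M N; rewrite -map_mxM mxE.
  have H : real_complex R s * (map_mx (real_complex R) x *m map_mx (real_complex R) x^T) 0 0 <
     (map_mx (real_complex R) x *m map_mx (real_complex R) A *m map_mx (real_complex R) x^T) 0 0.
    have m3 : forall k (M : 'M[R]_(1,k)) (B : 'M[R]_k) (N : 'M[R]_(k,1)),
      (map_mx (real_complex R) M *m map_mx (real_complex R) B *m map_mx (real_complex R) N) 0 0
       = real_complex R ((M *m B *m N) 0 0).
      by move=> k M B N; rewrite -!map_mxM mxE.
    by rewrite m00 m3 -rmorphM ltcR.
  rewrite xt; exact H.
have rd : root (char_poly (map_mx (real_complex R) A)) d by rewrite -eigenvalue_root_char.
have dE := RRe_real dR.
exists (complex.Re d); last by rewrite -ltcR dE.
move: rd; rewrite -map_char_poly -{1}dE.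
by rewrite fmorph_root.
Qed.

Local Close Scope sesquilinear_scope.

Theorem lemma3p3 (R : realType) (r delta n h lam : nat) (e : rel 'I_n) :
  (2 <= r)%N -> (0 < delta)%N -> (0 < h)%N ->
  ((lam + 1) * (h + 1) ^ 2 <= n)%N -> (r - 1 <= lam)%N -> (delta <= h)%N ->
  in_family_K delta r h lam e ->
  (n - (r - 1) * (h + 1))%:R - 1 < spec_rad R e /\
  spec_rad R e < (n - (r - 1) * (h + 1))%:R.
Proof.
move=> r2 d0 h0 Hn Hlam Hdh [[irr sym] [_ [_ [p [a [v [t
  [ple HN Hparts Hrm1 [Hv [Hclq Hno [/andP[t1 tdelta] Htc] [pa Ha] Hcross]]]]]]]]]].
set N := (n - (r - 1) * (h + 1))%N.
have lam0 : (0 < lam)%N by lia.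
have hN1 : (2 * lam < N)%N.
  have : ((r - 1) * (h + 1) <= lam * (h + 1))%N by apply: leq_mul.
  rewrite /N; nia.
have hN2 : (N * h + 2 * (lam * lam) < N * N)%N.
  have : ((r - 1) * (h + 1) <= lam * (h + 1))%N by apply: leq_mul.
  rewrite /N; nia.
have P_le : (\sum_l \sum_i ((p l == 0) && (p i != 0) && e l i : nat) <= lam)%N.
  by apply: cross_bound; lia.
have [y [py1 eay]] : exists y, p y = 1%N /\ e a y by apply: Ha; lia.
have Kbig : forall j, p j == 0%N -> (\sum_i ((p i == 0) && e i j : nat))%N = (N - 1)%N.
  move=> j pj; rewrite sum_card.
  have -> : [set i | (p i == 0) && e i j] = [set x | p x == 0%N] :\ j.
    apply/setP => i; rewrite !inE; have [->|ij] := eqVneq i j; first by rewrite (negbTE (irr j)) andbF.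
    case pi: (p i == 0%N) => //=; apply: Hclq => //; by rewrite (eqP pi) (eqP pj).
  have jin : j \in [set x | p x == 0%N] by rewrite inE.
  have := cardsD1 j [set x | p x == 0%N]; rewrite jin HN -/N; lia.
have Dbig : forall j, p j == 0%N -> (\sum_i ((p i != 0) && e i j : nat) <= lam)%N.
  move=> j pj; apply: (leq_trans _ P_le); rewrite [X in (_ <= X)%N](bigD1 j) //=.
  apply: leq_trans (leq_addr _ _); rewrite leq_eqVlt; apply/orP; left; apply/eqP.
  by apply: eq_bigr => i _; rewrite pj sym.
have SK : (\sum_i ((p i != 0) * \sum_l ((p l == 0) && e i l : nat)) <= lam)%N.
  apply: (leq_trans _ P_le); rewrite exchange_big /= leq_eqVlt; apply/orP; left; apply/eqP.
  rewrite (eq_bigr (fun i => \sum_l ((p i != 0) && (p l == 0) && e i l : nat))); last first.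
    by move=> i _; rewrite big_distrr /=; apply: eq_bigr => l _; case: (p i != 0); rewrite ?mul1n ?mul0n.
  rewrite exchange_big [RHS]exchange_big /=; apply: eq_bigr => j _; apply: eq_bigr => i _. by rewrite sym (andbC (p i != 0)).
have Dout : forall j, p j != 0%N -> (\sum_i ((p i != 0) && e i j : nat) <= h)%N.
  move=> j pj; rewrite (eq_bigr (fun i => ((p i != 0) && e j i : nat))); last by move=> i _; rewrite sym.
  by apply: (@out_nbr n e p r h v j).
split; last first.
  pose k i := (\sum_l ((p l == 0) && e i l : nat))%N.
  pose wn i := if p i == 0%N then (2 * lam * N)%N else (N + 2 * lam * k i)%N.
  have gen : forall j, (\sum_i wn i * e i j <= 2 * lam * N * \sum_i ((p i == 0) && e i j : nat)
       + N * \sum_i ((p i != 0) && e i j : nat) + 2 * lam * \sum_i ((p i != 0) * k i))%N.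
    move=> j; rewrite !big_distrr -!big_split /=; apply: leq_sum => i _.
    rewrite /wn; case: (p i == 0%N); case: (e i j) => /=; lia.
  have col : forall j, (\sum_i wn i * e i j < N * wn j)%N.
    move=> j; apply: (leq_ltn_trans (gen j)).
    case pj: (p j == 0%N).
      rewrite /wn pj Kbig //.
      by apply: g1 => //; apply: Dbig.
    rewrite /wn pj.
    have -> : (\sum_i ((p i == 0) && e i j : nat))%N = k j.
      by apply: eq_bigr => i _; rewrite sym.
    by apply: g2 hN2; [apply: Dout; rewrite pj | apply: SK].
  apply: specrad_lt; first by rewrite ltr0n; lia.
  move=> x rx; apply: (@dom _ _ (adj_mx R e) (\row_i (wn i)%:R) _ _ _ _ _ rx).
  - by move=> i j; rewrite mxE ler0n.
  - by move=> j; rewrite mxE ltr0n /wn; case: ifP => _; nia.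
  - by move=> j; apply: col_nat.
have pa0 : p a == 0%N by rewrite pa.
have py0 : p y != 0%N by rewrite py1.
have N0 : (0 < N)%N by lia.
pose xn j := (N * (p j == 0%N) + (j == y))%N.
have sq : (\sum_j xn j * xn j = N*N*N + 1)%N.
  rewrite (eq_bigr (fun j => N*N*(p j == 0%N) + (j == y))%N); last first.
    move=> j _; rewrite /xn; have [->|jy] := eqVneq j y; first by rewrite (negbTE py0) /= !muln0.
    by case: (p j == 0%N); rewrite /= ?muln0 ?muln1 ?addn0.
  rewrite big_split /= -big_distrr /= sum_card HN -/N sum_card.
  by rewrite (_ : [set j | j == y] = [set y]) ?cards1 //; apply/setP => j; rewrite !inE.
have colE : forall j, (\sum_i xn i * e i j = N * \sum_i ((p i == 0%N) && e i j : nat) + e y j)%N.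
  move=> j; rewrite (eq_bigr (fun i => N * ((p i == 0%N) && e i j) + (i == y) * e i j)%N); last first.
    by move=> i _; rewrite /xn mulnDl -mulnA mulnb.
  rewrite big_split /= -big_distrr /=; congr (_ + _)%N.
  by rewrite (bigD1 y) //= eqxx mul1n big1 ?addn0 // => i /negbTE ->.
have Ky : (0 < \sum_i ((p i == 0%N) && e i y : nat))%N.
  by rewrite (bigD1 a) //= pa0 eay.
have cr : (N*N*(N-1)*N + N + N <= \sum_j (\sum_i xn i * e i j) * xn j)%N.
  have -> : (N*N*(N-1)*N + N + N = \sum_j (N*N*(N-1)*(p j == 0%N) + N*(j == a) + N*(j == y)))%N.
    rewrite !big_split /= -!big_distrr /= sum_card HN -/N.
    rewrite (bigD1 a) //= eqxx big1 ?addn0 ?muln1; last by move=> i /negbTE ->.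
    by rewrite (bigD1 y) //= eqxx big1 ?addn0 ?muln1 // => i /negbTE ->.
  apply: leq_sum => j _; rewrite colE /xn.
  have [->|ja] := eqVneq j a.
    rewrite Kbig // pa0 -sym eay.
    have ay : (a == y) = false by apply/negbTE; apply: contraTneq py0 => <-; rewrite pa0.
    rewrite ay /= !muln1 !muln0 !addn0 mulnDl mul1n; apply: leq_add => //; rewrite mulnC mulnA. by rewrite (mulnC (N - 1)%N).
  have [->|jy] := eqVneq j y.
    rewrite (negbTE py0) (negbTE (irr y)) /=. by rewrite !muln0 !add0n !addn0 !muln1 leq_pmulr.
  rewrite /=; case pj: (p j == 0%N) => /=; last by rewrite !muln0.
  by rewrite Kbig // !muln1 !muln0 !addn0 -mulnA [X in (_ <= X)%N]mulnC leq_mul2l leq_addr orbT.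
have [t0 rt0 lt0] : exists2 t0, root (char_poly (adj_mx R e)) t0 & (N - 1)%:R < t0.
  apply: (@ray_real R n (adj_mx R e) (\row_j (xn j)%:R)); first exact: adj_sym.
  rewrite qf_nat1 qf_nat2 -natrM ltr_nat sq.
  exact: (leq_trans (g3 _ N0) cr).
apply: (@specrad_gt _ _ _ _ _ rt0); by rewrite -(natrB _ N0).
Qed.
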